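(* Let $A$ be a real $m\times m$ matrix, $f$ in the range of $A$, and $y$ the minimal-norm solution of $Ay=f$ (so $y\perp\mathcal{N}(A)$). Fix $q\in(0,1)$, $\alpha_0>0$, $C>1$, $\varepsilon\in(0,1)$. For each $\delta\in(0,1)$ let $f_\delta\in\mathbb{R}^m$ satisfy $\|f_\delta-f\|\le\delta$ and $(1-q)\alpha_0q\|Q_{\alpha_0q}^{-1}f_\delta\|>C\delta^\varepsilon$. Define $u_0^\delta=0$, $u_{n+1}^\delta=qu_n^\delta+(1-q)T_{\alpha_0q^{n+1}}^{-1}A^*f_\delta$, and let $n_\delta$ be the smallest integer $n\ge1$ with $G_n\le C\delta^\varepsilon$. Then $$\lim_{\delta\to0}\|u_{n_\delta}^\delta-y\|=0.$$
   Context: $A^*$ is the transpose of $A$, $T:=A^*A$, $T_a:=T+aI$, $Q:=AA^*$, $Q_a:=Q+aI$ for $a>0$; $\mathcal{N}(A)=\{u:Au=0\}$; $\|\cdot\|$ is the Euclidean norm. $G_0=0$ and $G_n=qG_{n-1}+(1-q)\alpha_0q^n\|Q_{\alpha_0q^n}^{-1}f_\delta\|$ for $n\ge1$. *)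

(* Defs.v *)
From Stdlib Require Import Reals Lra ClassicalEpsilon.
Open Scope R_scope.

(* vectors in R^m : functions nat -> R, only indices i < m are relevant;
   m x m matrices : functions nat -> nat -> R, only indices < m relevant *)
Definition vec := nat -> R.
Definition mat := nat -> nat -> R.

Fixpoint rsum (n : nat) (f : nat -> R) : R :=
  match n with O => 0 | S k => rsum k f + f k end.

Definition matvec (m : nat) (M : mat) (v : vec) : vec :=
  fun i => rsum m (fun j => M i j * v j).

Definition transp (A : mat) : mat := fun i j => A j i.

Definition vnorm (m : nat) (v : vec) : R := sqrt (rsum m (fun i => v i ^ 2)).

Definition vsub (u v : vec) : vec := fun i => u i - v i.

Definition idm (i j : nat) : R := if Nat.eqb i j then 1 else 0.

(* T_a = A^* A + a I ,  Q_a = A A^* + a I *)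
Definition Tmat (m : nat) (A : mat) (a : R) : mat :=
  fun i j => rsum m (fun k => A k i * A k j) + a * idm i j.
Definition Qmat (m : nat) (A : mat) (a : R) : mat :=
  fun i j => rsum m (fun k => A i k * A j k) + a * idm i j.

(* M^{-1} b : a (the) solution x of M x = b on R^m (chosen by epsilon;
   for invertible M it is unique on the indices < m) *)
Definition solve (m : nat) (M : mat) (b : vec) : vec :=
  epsilon (inhabits (fun _ => 0))
    (fun x => forall i, (i < m)%nat -> matvec m M x i = b i).

Fixpoint Gseq (m : nat) (A : mat) (q a0 : R) (fd : vec) (n : nat) : R :=
  match n with
  | O => 0
  | S k => q * Gseq m A q a0 fd k
           + (1 - q) * a0 * q ^ (S k) * vnorm m (solve m (Qmat m A (a0 * q ^ (S k))) fd)
  end.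

Fixpoint useq (m : nat) (A : mat) (q a0 : R) (fd : vec) (n : nat) : vec :=
  match n with
  | O => fun _ => 0
  | S k => fun i => q * useq m A q a0 fd k i
           + (1 - q) * solve m (Tmat m A (a0 * q ^ (S k))) (matvec m (transp A) fd) i
  end.

(* Main.v *)
Require Import Defs.
From Stdlib Require Import Reals Lra Lia Psatz ClassicalEpsilon.
Open Scope R_scope.


Lemma rsum_ext n f g : (forall i, (i<n)%nat -> f i = g i) -> rsum n f = rsum n g.
Proof. induction n; simpl; intros; auto. rewrite IHn by (intros; apply H; lia). rewrite H by lia. ring. Qed.
Lemma rsum_add n f g : rsum n (fun i => f i + g i) = rsum n f + rsum n g.
Proof. induction n; simpl; [ring|rewrite IHn; ring]. Qed.
Lemma rsum_scal n c f : rsum n (fun i => c * f i) = c * rsum n f.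
Proof. induction n; simpl; [ring|rewrite IHn; ring]. Qed.
Lemma rsum_sub n f g : rsum n (fun i => f i - g i) = rsum n f - rsum n g.
Proof. induction n; simpl; [ring|rewrite IHn; ring]. Qed.
Lemma rsum_zero n : rsum n (fun _ => 0) = 0.
Proof. induction n; simpl; [ring|rewrite IHn; ring]. Qed.
Lemma rsum_le n f g : (forall i, (i<n)%nat -> f i <= g i) -> rsum n f <= rsum n g.
Proof. induction n; simpl; intros; [lra|]. assert (f n <= g n) by (apply H; lia).
 assert (rsum n f <= rsum n g) by (apply IHn; intros; apply H; lia). lra. Qed.
Lemma rsum_nonneg n f : (forall i, (i<n)%nat -> 0 <= f i) -> 0 <= rsum n f.
Proof. intros. rewrite <- (rsum_zero n). apply rsum_le; auto. Qed.
Lemma rsum_swap n k F : rsum n (fun i => rsum k (fun j => F i j)) = rsum k (fun j => rsum n (fun i => F i j)).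
Proof. induction n; simpl. now rewrite rsum_zero. rewrite IHn, <- rsum_add. reflexivity. Qed.
Lemma rsum_nonneg_zero n f : (forall i, (i<n)%nat -> 0 <= f i) -> rsum n f = 0 -> forall i, (i<n)%nat -> f i = 0.
Proof. induction n; simpl; intros H H0 i Hi; [lia|].
 assert (0 <= rsum n f) by (apply rsum_nonneg; intros; apply H; lia).
 assert (0 <= f n) by (apply H; lia).
 destruct (Nat.eq_dec i n). subst; lra. apply IHn; [intros; apply H; lia|lra|lia]. Qed.
Lemma rsum_idm m i x : (i<m)%nat -> rsum m (fun j => idm i j * x j) = x i.
Proof. induction m; simpl; intros; [lia|]. destruct (Nat.eq_dec i m).
 - subst. rewrite (rsum_ext _ _ (fun _ => 0)). rewrite rsum_zero. unfold idm. rewrite Nat.eqb_refl. ring.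
   intros. unfold idm. replace (Nat.eqb m i) with false. ring. symmetry; apply Nat.eqb_neq; lia.
 - rewrite IHm by lia. unfold idm. replace (Nat.eqb i m) with false. ring. symmetry; apply Nat.eqb_neq; lia. Qed.

Definition ip (m : nat) (u v : vec) : R := rsum m (fun i => u i * v i).

Lemma vnorm_ip m v : vnorm m v = sqrt (ip m v v).
Proof. unfold vnorm, ip. f_equal. apply rsum_ext; intros; ring. Qed.
Lemma ip_nonneg m v : 0 <= ip m v v.
Proof. apply rsum_nonneg; intros; nra. Qed.
Lemma ip_sym m u v : ip m u v = ip m v u.
Proof. apply rsum_ext; intros; ring. Qed.
Lemma ip_ext m u u' v v' : (forall i, (i<m)%nat -> u i = u' i) -> (forall i, (i<m)%nat -> v i = v' i) -> ip m u v = ip m u' v'.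
Proof. intros. apply rsum_ext; intros. rewrite H, H0; auto. Qed.
Lemma ip_zero m z : ip m z z = 0 -> forall i, (i<m)%nat -> z i = 0.
Proof. intros. assert (z i * z i = 0). apply (rsum_nonneg_zero m (fun i => z i * z i)); auto. intros; nra. nra. Qed.
Lemma ip_zero_l m z u : ip m z z = 0 -> ip m z u = 0.
Proof. intros. unfold ip. rewrite (rsum_ext _ _ (fun _ => 0)). apply rsum_zero. intros. rewrite (ip_zero m z H i H0). ring. Qed.
Lemma ip_subl m u v w : ip m (fun i => u i - v i) w = ip m u w - ip m v w.
Proof. unfold ip. rewrite <- rsum_sub. apply rsum_ext; intros; ring. Qed.
Lemma ip_addl m u v w : ip m (fun i => u i + v i) w = ip m u w + ip m v w.
Proof. unfold ip. rewrite <- rsum_add. apply rsum_ext; intros; ring. Qed.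
Lemma ip_scall m c u w : ip m (fun i => c * u i) w = c * ip m u w.
Proof. unfold ip. rewrite <- rsum_scal. apply rsum_ext; intros; ring. Qed.

Lemma ip_young m u v t : 0 < t -> ip m u v <= t/2 * ip m u u + /(2*t) * ip m v v.
Proof. intros. unfold ip. rewrite <- !rsum_scal, <- rsum_add. apply rsum_le. intros.
 assert (t/2*(u i*u i) + /(2*t)*(v i*v i) - u i * v i = (t*u i - v i)^2/(2*t)) by (field; lra).
 assert (0 <= (t*u i - v i)^2/(2*t)). unfold Rdiv; apply Rmult_le_pos. apply pow2_ge_0. left; apply Rinv_0_lt_compat; lra. lra. Qed.

Lemma CS m u v : ip m u v <= vnorm m u * vnorm m v.
Proof. rewrite !vnorm_ip. pose proof (ip_nonneg m u). pose proof (ip_nonneg m v).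
 pose proof (sqrt_pos (ip m u u)). pose proof (sqrt_pos (ip m v v)).
 destruct (Req_dec (ip m u u) 0). rewrite ip_zero_l; auto. nra.
 destruct (Req_dec (ip m v v) 0). rewrite ip_sym, ip_zero_l; auto. nra.
 assert (0 < sqrt (ip m u u)) by (apply sqrt_lt_R0; lra).
 assert (0 < sqrt (ip m v v)) by (apply sqrt_lt_R0; lra).
 pose proof (ip_young m u v (sqrt (ip m v v) / sqrt (ip m u u))).
 assert (Hu := sqrt_sqrt (ip m u u) H). assert (Hv := sqrt_sqrt (ip m v v) H0).
 eapply Rle_trans. apply H7. apply Rdiv_lt_0_compat; auto.
 set (a := sqrt (ip m u u)) in *. set (b := sqrt (ip m v v)) in *.
 rewrite <- Hu, <- Hv. right. field. lra. Qed.

Lemma vnorm_pos m v : 0 <= vnorm m v.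
Proof. rewrite vnorm_ip. apply sqrt_pos. Qed.
Lemma vnorm_sq m v : vnorm m v * vnorm m v = ip m v v.
Proof. rewrite vnorm_ip. apply sqrt_sqrt, ip_nonneg. Qed.

Lemma sq_le_le x y : 0 <= y -> x*x <= y*y -> x <= y.
Proof. intros. nra. Qed.

Lemma vnorm_triang m u v : vnorm m (fun i => u i + v i) <= vnorm m u + vnorm m v.
Proof. apply sq_le_le. pose proof (vnorm_pos m u); pose proof (vnorm_pos m v); lra.
 rewrite vnorm_sq. rewrite ip_addl, (ip_sym m u), (ip_sym m v), !ip_addl.
 pose proof (CS m u v). rewrite <- (vnorm_sq m u), <- (vnorm_sq m v). rewrite (ip_sym m v u). nra. Qed.

Lemma vnorm_scal m c u : vnorm m (fun i => c * u i) = Rabs c * vnorm m u.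
Proof. rewrite !vnorm_ip. replace (ip m (fun i => c * u i) (fun i => c * u i)) with ((c*c) * ip m u u).
 rewrite sqrt_mult_alt. f_equal. rewrite <- sqrt_Rsqr_abs. reflexivity. nra.
 unfold ip. rewrite <- rsum_scal. apply rsum_ext; intros; ring. Qed.

Lemma vnorm_ext m u v : (forall i, (i<m)%nat -> u i = v i) -> vnorm m u = vnorm m v.
Proof. intros. rewrite !vnorm_ip. f_equal. apply ip_ext; auto. Qed.


Lemma mv_ext m B u v i : (forall j, (j<m)%nat -> u j = v j) -> matvec m B u i = matvec m B v i.
Proof. intros. unfold matvec. apply rsum_ext. intros. rewrite H; auto. Qed.
Lemma mv_sub m B u v i : matvec m B (fun j => u j - v j) i = matvec m B u i - matvec m B v i.
Proof. unfold matvec. rewrite <- rsum_sub. apply rsum_ext; intros; ring. Qed.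
Lemma mv_add m B u v i : matvec m B (fun j => u j + v j) i = matvec m B u i + matvec m B v i.
Proof. unfold matvec. rewrite <- rsum_add. apply rsum_ext; intros; ring. Qed.
Lemma mv_scal m B c u i : matvec m B (fun j => c * u j) i = c * matvec m B u i.
Proof. unfold matvec. rewrite <- rsum_scal. apply rsum_ext; intros; ring. Qed.

Lemma adjoint m B x z : ip m (matvec m B x) z = ip m x (matvec m (transp B) z).
Proof. unfold ip, matvec, transp.
 rewrite (rsum_ext _ _ (fun i => rsum m (fun j => B i j * x j * z i))).
 rewrite rsum_swap. apply rsum_ext. intros. rewrite <- rsum_scal. apply rsum_ext; intros; ring.
 intros. rewrite Rmult_comm, <- rsum_scal. apply rsum_ext; intros; ring. Qed.

Lemma ip_lincomb m k v B c : ip m v (fun i => rsum k (fun l => B i l * c l)) = rsum k (fun l => c l * ip m v (fun i => B i l)).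
Proof. unfold ip. rewrite (rsum_ext _ _ (fun i => rsum k (fun l => v i * B i l * c l))).
 rewrite rsum_swap. apply rsum_ext. intros. rewrite <- rsum_scal. apply rsum_ext; intros; ring.
 intros. rewrite <- rsum_scal. apply rsum_ext; intros; ring. Qed.

Lemma TmatE m A a x i : (i<m)%nat -> matvec m (Tmat m A a) x i = matvec m (transp A) (matvec m A x) i + a * x i.
Proof. intros. unfold matvec, Tmat, transp.
 rewrite (rsum_ext _ _ (fun j => rsum m (fun k => A k i * A k j * x j) + a * (idm i j * x j))).
 rewrite rsum_add, rsum_scal, rsum_idm by auto. f_equal. rewrite rsum_swap. apply rsum_ext. intros.
 rewrite <- rsum_scal. apply rsum_ext; intros; ring.
 intros j Hj. rewrite Rmult_plus_distr_r, (Rmult_comm _ (x j)), <- rsum_scal. f_equal. apply rsum_ext; intros; ring. ring. Qed.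

Lemma QmatE m A a x i : (i<m)%nat -> matvec m (Qmat m A a) x i = matvec m A (matvec m (transp A) x) i + a * x i.
Proof. intros. unfold matvec, Qmat, transp.
 rewrite (rsum_ext _ _ (fun j => rsum m (fun k => A i k * A j k * x j) + a * (idm i j * x j))).
 rewrite rsum_add, rsum_scal, rsum_idm by auto. f_equal. rewrite rsum_swap. apply rsum_ext. intros.
 rewrite <- rsum_scal. apply rsum_ext; intros; ring.
 intros j Hj. rewrite Rmult_plus_distr_r, (Rmult_comm _ (x j)), <- rsum_scal. f_equal. apply rsum_ext; intros; ring. ring. Qed.

Lemma ipT m A a x : ip m x (matvec m (Tmat m A a) x) = ip m (matvec m A x) (matvec m A x) + a * ip m x x.
Proof. rewrite (ip_ext m x x _ (fun i => matvec m (transp A) (matvec m A x) i + a * x i)); auto.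
 rewrite ip_sym, ip_addl, ip_scall, (ip_sym _ _ x). rewrite <- adjoint. reflexivity.
 intros; apply TmatE; auto. Qed.

Lemma ipQ m A a x : ip m x (matvec m (Qmat m A a) x) = ip m (matvec m (transp A) x) (matvec m (transp A) x) + a * ip m x x.
Proof. rewrite (ip_ext m x x _ (fun i => matvec m A (matvec m (transp A) x) i + a * x i)); auto.
 rewrite ip_sym, ip_addl, ip_scall, (ip_sym _ _ x). change A with (transp (transp A)) at 1. rewrite <- adjoint. reflexivity.
 intros; apply QmatE; auto. Qed.


Lemma ip_addr m u v w : ip m w (fun i => u i + v i) = ip m w u + ip m w v.
Proof. rewrite ip_sym, ip_addl, (ip_sym m u), (ip_sym m v). reflexivity. Qed.

Lemma proj m (B : mat) k : forall b : vec, exists w : vec, forall j, (j<k)%nat ->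
  ip m (fun i => b i - rsum k (fun l => B i l * w l)) (fun i => B i j) = 0.
Proof. induction k; intros b.
 - exists (fun _ => 0). intros; lia.
 - destruct (IHk b) as [w0 Hw0]. destruct (IHk (fun i => B i k)) as [wc Hwc].
   set (u := fun i => b i - rsum k (fun l => B i l * w0 l)).
   set (r := fun i => B i k - rsum k (fun l => B i l * wc l)).
   set (g := ip m u r / ip m r r).
   exists (fun l => if Nat.eqb l k then g else w0 l - g * wc l).
   assert (Hres : forall i, b i - rsum (S k) (fun l => B i l * (if Nat.eqb l k then g else w0 l - g * wc l)) = u i - g * r i).
   { intros i. simpl. rewrite Nat.eqb_refl.
     rewrite (rsum_ext _ _ (fun l => B i l * w0 l - g * (B i l * wc l))).
     rewrite rsum_sub, rsum_scal. unfold u, r. ring.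
     intros l Hl. replace (Nat.eqb l k) with false. ring. symmetry; apply Nat.eqb_neq; lia. }
   assert (Hlt : forall j, (j<k)%nat -> ip m (fun i => u i - g * r i) (fun i => B i j) = 0).
   { intros j Hj. rewrite ip_subl, ip_scall. unfold u, r. rewrite Hw0, Hwc by auto. ring. }
   intros j Hj. rewrite (ip_ext m _ (fun i => u i - g * r i) _ (fun i => B i j)); auto.
   destruct (Nat.eq_dec j k).
   + subst j. rewrite (ip_ext m _ (fun i => u i - g * r i) _ (fun i => r i + rsum k (fun l => B i l * wc l))); auto.
     rewrite ip_addr, ip_lincomb.
     rewrite (rsum_ext _ _ (fun _ => 0)). rewrite rsum_zero.
     rewrite Rplus_0_r, ip_subl, ip_scall.
     destruct (Req_dec (ip m r r) 0).
     * rewrite (ip_sym m u r), ip_zero_l by auto. rewrite H. ring.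
     * unfold g. field. auto.
     * intros l Hl. rewrite Hlt by auto. ring.
     * intros i Hi. unfold r. ring.
   + apply Hlt. lia.
Qed.

Lemma normal_eq m B b : exists w, forall j, (j<m)%nat -> matvec m (transp B) (fun i => b i - matvec m B w i) j = 0.
Proof. destruct (proj m B m b) as [w Hw]. exists w. intros j Hj. rewrite <- (Hw j Hj).
 unfold matvec, transp, ip. apply rsum_ext; intros; ring. Qed.

Lemma posdef_solvable m B b : (forall i j, B i j = B j i) ->
  (forall z, ip m z (matvec m B z) = 0 -> ip m z z = 0) ->
  exists x, forall i, (i<m)%nat -> matvec m B x i = b i.
Proof. intros Hs Hp. destruct (normal_eq m B b) as [w Hw]. exists w.
 set (z := fun i => b i - matvec m B w i) in *.
 assert (ip m z (matvec m B z) = 0).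
 { unfold ip. rewrite (rsum_ext _ _ (fun _ => 0)). apply rsum_zero. intros i Hi.
   assert (E : matvec m B z i = matvec m (transp B) z i).
   { unfold matvec, transp. apply rsum_ext. intros; rewrite Hs; auto. }
   rewrite E. fold z in Hw. rewrite (Hw i Hi). ring. }
 intros i Hi. pose proof (ip_zero m z (Hp z H) i Hi). unfold z in H0. lra. Qed.

Lemma solve_spec m M b : (exists x, forall i, (i<m)%nat -> matvec m M x i = b i) ->
  forall i, (i<m)%nat -> matvec m M (solve m M b) i = b i.
Proof. intros H. unfold solve. apply epsilon_spec. exact H. Qed.

Lemma solveT m A a b : 0 < a -> forall i, (i<m)%nat -> matvec m (Tmat m A a) (solve m (Tmat m A a) b) i = b i.
Proof. intros Ha. apply solve_spec. apply posdef_solvable.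
 - intros. unfold Tmat, idm. rewrite Nat.eqb_sym. f_equal. apply rsum_ext; intros; ring.
 - intros z Hz. rewrite ipT in Hz. pose proof (ip_nonneg m (matvec m A z)). pose proof (ip_nonneg m z). nra. Qed.

Lemma solveQ m A a b : 0 < a -> forall i, (i<m)%nat -> matvec m (Qmat m A a) (solve m (Qmat m A a) b) i = b i.
Proof. intros Ha. apply solve_spec. apply posdef_solvable.
 - intros. unfold Qmat, idm. rewrite Nat.eqb_sym. f_equal. apply rsum_ext; intros; ring.
 - intros z Hz. rewrite ipQ in Hz. pose proof (ip_nonneg m (matvec m (transp A) z)). pose proof (ip_nonneg m z). nra. Qed.


Lemma noiseT m A a x g : 0 < a -> (forall i, (i<m)%nat -> matvec m (Tmat m A a) x i = matvec m (transp A) g i) ->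
  vnorm m x * (2 * sqrt a) <= vnorm m g.
Proof. intros Ha H. assert (E : ip m x (matvec m (Tmat m A a) x) = ip m (matvec m A x) g).
 { rewrite adjoint. apply ip_ext; auto. }
 rewrite ipT in E. pose proof (ip_young m (matvec m A x) g 2 ltac:(lra)).
 assert (a * ip m x x <= ip m g g / 4) by (unfold Rdiv; nra).
 apply sq_le_le. apply vnorm_pos. rewrite vnorm_sq.
 replace (vnorm m x * (2 * sqrt a) * (vnorm m x * (2 * sqrt a))) with (4 * (sqrt a * sqrt a) * (vnorm m x * vnorm m x)) by ring.
 rewrite vnorm_sq, sqrt_sqrt by lra. lra. Qed.

Lemma noiseQ m A a x g : 0 < a -> (forall i, (i<m)%nat -> matvec m (Qmat m A a) x i = g i) ->
  a * vnorm m x <= vnorm m g.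
Proof. intros Ha H. assert (E : ip m x (matvec m (Qmat m A a) x) = ip m x g).
 { apply ip_ext; auto. }
 rewrite ipQ in E. pose proof (ip_young m x g a Ha). pose proof (ip_nonneg m (matvec m (transp A) x)).
 assert (a/2 * ip m x x <= /(2*a) * ip m g g) by lra.
 assert (a * a * ip m x x <= ip m g g).
 { apply (Rmult_le_compat_l (2*a)) in H2; [|lra].
   replace (2 * a * (a / 2 * ip m x x)) with (a*a*ip m x x) in H2 by (field; lra).
   replace (2 * a * (/ (2 * a) * ip m g g)) with (ip m g g) in H2 by (field; lra). auto. }
 apply sq_le_le. apply vnorm_pos. rewrite vnorm_sq.
 replace (a * vnorm m x * (a * vnorm m x)) with (a*a*(vnorm m x * vnorm m x)) by ring. rewrite vnorm_sq. auto. Qed.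

Lemma range_AT m A f y :
  (forall i, (i < m)%nat -> matvec m A y i = f i) ->
  (forall z : vec, (forall i, (i < m)%nat -> matvec m A z i = f i) -> vnorm m y <= vnorm m z) ->
  exists v, forall i, (i<m)%nat -> y i = matvec m (transp A) v i.
Proof. intros Hy Hmin. destruct (normal_eq m (transp A) y) as [w Hw]. exists w.
 set (z := fun i => y i - matvec m (transp A) w i) in *.
 change (forall j, (j<m)%nat -> matvec m A z j = 0) in Hw.
 set (y' := matvec m (transp A) w).
 assert (Hy' : forall i, (i<m)%nat -> matvec m A y' i = f i).
 { intros i Hi. rewrite <- Hy by auto. rewrite (mv_ext m A y' (fun j => y j - z j)).
   rewrite mv_sub, Hw by auto. ring. intros; unfold z, y'; ring. }
 pose proof (Hmin y' Hy').
 assert (ip m y y <= ip m y' y').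
 { apply sqrt_le_0; try apply ip_nonneg. rewrite <- !vnorm_ip. auto. }
 assert (ip m y' z = 0).
 { unfold y'. rewrite adjoint. unfold ip. rewrite (rsum_ext _ _ (fun _ => 0)). apply rsum_zero.
   intros i Hi. change (matvec m (transp (transp A)) z i) with (matvec m A z i). rewrite Hw; auto. ring. }
 assert (ip m y y = ip m y' y' + 2 * ip m y' z + ip m z z).
 { rewrite (ip_ext m y (fun i => y' i + z i) y (fun i => y' i + z i)).
   rewrite !ip_addl, (ip_sym m _ (fun i => y' i + z i)), ip_addl, (ip_sym m _ (fun i => y' i + z i)), ip_addl.
   rewrite (ip_sym m z y'). ring. all: intros; unfold z, y'; ring. }
 pose proof (ip_nonneg m z).
 assert (ip m z z = 0) by lra.
 intros i Hi. pose proof (ip_zero m z H4 i Hi) as H5. unfold z in H5. cbv beta in H5. unfold y'. lra. Qed.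


Lemma mv_zero m M u i : (forall j, (j<m)%nat -> u j = 0) -> matvec m M u i = 0.
Proof. intros. unfold matvec. rewrite (rsum_ext _ _ (fun _ => 0)). apply rsum_zero. intros; rewrite H; auto; ring. Qed.

Lemma vnorm_opp_sub m u v : vnorm m (vsub u v) = vnorm m (vsub v u).
Proof. rewrite (vnorm_ext m (vsub u v) (fun i => (-1) * vsub v u i)). rewrite vnorm_scal.
 rewrite Rabs_left by lra. ring. intros; unfold vsub; ring. Qed.

Lemma vnorm_zero m v : vnorm m v = 0 -> forall i, (i<m)%nat -> v i = 0.
Proof. intros. apply (ip_zero m); auto. rewrite <- vnorm_sq, H. ring. Qed.


Lemma sbound (m : nat) (A : mat) (f y v : vec) (Hy : forall i, (i < m)%nat -> matvec m A y i = f i) (Hv : forall i, (i<m)%nat -> y i = matvec m (transp A) v i) a g : 0 < a ->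
  vnorm m (vsub (solve m (Tmat m A a) (matvec m (transp A) g)) y) * (2 * sqrt a) <= vnorm m (vsub g f) + a * vnorm m v.
Proof. intros Ha. set (s := solve m (Tmat m A a) (matvec m (transp A) g)).
 eapply Rle_trans. apply (noiseT m A a _ (fun i => vsub g f i + (- a) * v i) Ha).
 - intros i Hi. unfold vsub. rewrite mv_sub. unfold s. rewrite solveT by auto.
   rewrite TmatE by auto. rewrite mv_add, mv_scal, mv_sub. rewrite Hv by auto.
   rewrite (mv_ext m (transp A) (matvec m A y) f) by auto. ring.
 - eapply Rle_trans. apply vnorm_triang. rewrite vnorm_scal. rewrite Rabs_Ropp, Rabs_right by lra. lra.
Qed.

Lemma xbound (m : nat) (A : mat) (f y v : vec) (Hy : forall i, (i < m)%nat -> matvec m A y i = f i) (Hv : forall i, (i<m)%nat -> y i = matvec m (transp A) v i) a g : 0 < a -> a * vnorm m (solve m (Qmat m A a) g) <= vnorm m (vsub g f) + 2 * a * vnorm m v.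
Proof. intros Ha. set (x := solve m (Qmat m A a) g).
 assert (H : a * vnorm m (vsub x v) <= vnorm m (vsub g f) + a * vnorm m v).
 { eapply Rle_trans. apply (noiseQ m A a _ (fun i => vsub g f i + (- a) * v i) Ha).
   - intros i Hi. unfold vsub. rewrite mv_sub. unfold x. rewrite solveQ by auto.
     rewrite QmatE by auto. rewrite (mv_ext m A (matvec m (transp A) v) y).
     rewrite Hy by auto. ring. intros; rewrite Hv; auto.
   - eapply Rle_trans. apply vnorm_triang. rewrite vnorm_scal. rewrite Rabs_Ropp, Rabs_right by lra. lra. }
 assert (vnorm m x <= vnorm m (vsub x v) + vnorm m v).
 { rewrite (vnorm_ext m x (fun i => vsub x v i + v i)). apply vnorm_triang. intros; unfold vsub; ring. }
 nra. Qed.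

Lemma xlower m A f a g : 0 < a ->
  a * vnorm m (solve m (Qmat m A a) f) <= a * vnorm m (solve m (Qmat m A a) g) + vnorm m (vsub g f).
Proof. intros Ha. set (w := solve m (Qmat m A a) f). set (x := solve m (Qmat m A a) g).
 assert (a * vnorm m (vsub w x) <= vnorm m (vsub g f)).
 { rewrite vnorm_opp_sub. apply (noiseQ m A); auto. intros i Hi. unfold vsub. rewrite mv_sub. unfold x, w.
   rewrite !solveQ by auto. ring. }
 assert (vnorm m w <= vnorm m x + vnorm m (vsub w x)).
 { rewrite (vnorm_ext m w (fun i => x i + vsub w x i)). apply vnorm_triang. intros; unfold vsub; ring. }
 nra. Qed.

Lemma rec_upper (G : nat -> R) q r D c : 0 < r < 1 -> q = r * r -> 0 <= c -> 0 <= D -> G 0%nat <= D + 2 * c ->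
  (forall k, G (S k) <= q * G k + (1 - q) * (D + c * r ^ (S k))) -> forall n, G n <= D + 2 * c * r ^ n.
Proof. intros Hr Hq Hc HD H0 HS. induction n. simpl. lra.
 eapply Rle_trans. apply HS. simpl. subst q. assert (0 <= c * r ^ n) by (apply Rmult_le_pos; auto; apply pow_le; lra).
 assert (0 <= r * r) by nra. assert (0 <= 1 - r*r) by nra.
 assert (r * r * G n <= r * r * (D + 2 * c * r ^ n)) by (apply Rmult_le_compat_l; auto).
 assert (0 <= r * (1-r)*(1-r) * (c * r^n)). apply Rmult_le_pos; auto. apply Rmult_le_pos; [apply Rmult_le_pos|]; lra.
 assert (E : D + 2 * c * (r * r ^ n) - (r * r * (D + 2 * c * r ^ n) + (1 - r * r) * (D + c * (r * r ^ n)))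
   = r * (1-r)*(1-r) * (c * r^n)) by ring. lra. Qed.

Lemma rec_err (E : nat -> R) q r Y c1 D c2 : 0 < r < 1 -> q = r * r -> 0 <= c1 -> 0 <= c2 -> 0 <= D -> E 0%nat <= Y + c1 * D + 2 * c2 ->
  (forall k, E (S k) <= q * E k + (1 - q) * (c1 * D * (/ r) ^ (S k) + c2 * r ^ (S k))) ->
  forall n, E n <= q ^ n * Y + c1 * D * (/ r) ^ n + 2 * c2 * r ^ n.
Proof. intros Hr Hq H1 H2 HD H0 HS. induction n. simpl. lra.
 eapply Rle_trans. apply HS. simpl. subst q.
 assert (0 <= c2 * r ^ n) by (apply Rmult_le_pos; auto; apply pow_le; lra).
 assert (0 <= c1 * D * (/r)^n). apply Rmult_le_pos. nra. apply pow_le. left; apply Rinv_0_lt_compat; lra.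
 assert (1 <= / r). { rewrite <- Rinv_1. apply Rinv_le_contravar; lra. }
 assert (0 <= r * r) by nra. assert (0 <= 1 - r*r) by nra.
 assert (r * r * E n <= r * r * (r * r) ^ n * Y + r * r * (c1 * D * (/ r) ^ n) + r * r * (2 * c2 * r ^ n)).
 { replace (r * r * (r * r) ^ n * Y + r * r * (c1 * D * (/ r) ^ n) + r * r * (2 * c2 * r ^ n)) with
     (r * r * ((r * r) ^ n * Y + c1 * D * (/ r) ^ n + 2 * c2 * r ^ n)) by ring. apply Rmult_le_compat_l; auto. }
 assert (0 <= r * (1-r)*(1-r) * (c2 * r^n)). apply Rmult_le_pos; auto. apply Rmult_le_pos; [apply Rmult_le_pos|]; lra.
 assert (r * r * (c1 * D * (/ r) ^ n) <= r * r * (/r) * (c1 * D * (/ r) ^ n)).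
 { apply Rmult_le_compat_r; auto. nra. }
 nra. Qed.


Lemma finite_min (T : nat -> R) : (forall n, 0 < T n) -> forall N, exists mu, 0 < mu /\ forall n, (n <= N)%nat -> mu <= T n.
Proof. intros HT N. induction N.
 - exists (T 0%nat). split; auto. intros n Hn. replace n with 0%nat by lia. lra.
 - destruct IHN as [mu [H0 H1]]. exists (Rmin mu (T (S N))). split. apply Rmin_pos; auto.
   intros n Hn. destruct (Nat.eq_dec n (S N)). subst; apply Rmin_r. eapply Rle_trans. apply Rmin_l. apply H1; lia. Qed.

Lemma phi_gt d eps : 0 < d < 1 -> 0 < eps < 1 -> d < Rpower d eps.
Proof. intros. unfold Rpower. rewrite <- (exp_ln d) at 1 by lra. apply exp_increasing.
 assert (ln d < 0). rewrite <- ln_1. apply ln_increasing; lra. nra. Qed.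

Lemma Rpower_small d p B : 0 < p -> 0 < B -> 0 < d -> d < Rpower B (/ p) -> Rpower d p < B.
Proof. intros. assert (E : Rpower (Rpower B (/p)) p = B).
 { rewrite Rpower_mult. replace (/p * p) with 1 by (field; lra). apply Rpower_1; auto. }
 rewrite <- E. apply Rlt_Rpower_l; auto. Qed.

Lemma Rpower_pos x p : 0 < Rpower x p.
Proof. unfold Rpower. apply exp_pos. Qed.

Lemma pow_le1 x n : 0 <= x < 1 -> x ^ n <= 1.
Proof. intros. destruct n. simpl; lra. pose proof (pow_lt_1_compat x (S n) H ltac:(lia)). lra. Qed.


Theorem theorem2p10
  (m : nat) (A : mat) (f y : vec)
  (Hrange : exists x : vec, forall i, (i < m)%nat -> matvec m A x i = f i)
  (Hy : forall i, (i < m)%nat -> matvec m A y i = f i)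
  (Hymin : forall z : vec, (forall i, (i < m)%nat -> matvec m A z i = f i) ->
           vnorm m y <= vnorm m z)
  (q a0 C eps : R)
  (Hq : 0 < q < 1) (Ha0 : 0 < a0) (HC : 1 < C) (Heps : 0 < eps < 1)
  (fd : R -> vec)
  (Hfd : forall d, 0 < d < 1 -> vnorm m (vsub (fd d) f) <= d)
  (Hfd2 : forall d, 0 < d < 1 ->
     (1 - q) * a0 * q * vnorm m (solve m (Qmat m A (a0 * q)) (fd d)) > C * Rpower d eps)
  (nd : R -> nat)
  (Hnd : forall d, 0 < d < 1 ->
     (1 <= nd d)%nat /\ Gseq m A q a0 (fd d) (nd d) <= C * Rpower d eps /\
     (forall n, (1 <= n)%nat -> Gseq m A q a0 (fd d) n <= C * Rpower d eps -> (nd d <= n)%nat)) :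
  forall e, 0 < e -> exists eta, 0 < eta /\
    forall d, 0 < d < 1 -> d < eta ->
      vnorm m (vsub (useq m A q a0 (fd d) (nd d)) y) < e.
Proof.
 destruct (range_AT m A f y Hy Hymin) as [v Hv].
 set (r := sqrt q).
 assert (Hr : 0 < r < 1). { split. apply sqrt_lt_R0; lra. rewrite <- sqrt_1. apply sqrt_lt_1_alt; lra. }
 assert (Hrq : q = r * r). { unfold r; rewrite sqrt_sqrt; lra. }
 assert (Hqn : forall n, q ^ n = r ^ n * r ^ n). { intros; rewrite Hrq, Rpow_mult_distr; auto. }
 assert (Hrn : forall n, 0 < r ^ n). { intros; apply pow_lt; lra. }
 assert (Hqr : forall n, q ^ n <= r ^ n). { intros. rewrite Hqn. pose proof (Hrn n). assert (r ^ n <= 1) by (apply pow_le1; lra). nra. }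
 assert (Han : forall n, 0 < a0 * q ^ n). { intros. apply Rmult_lt_0_compat; auto. apply pow_lt; lra. }
 set (V := vnorm m v). set (Y := vnorm m y).
 assert (HV : 0 <= V) by apply vnorm_pos. assert (HY : 0 <= Y) by apply vnorm_pos.
 (* f nonzero *)
 assert (Hw : forall a, 0 < a -> 0 < vnorm m (solve m (Qmat m A a) f)).
 { intros a Ha. destruct (vnorm_pos m (solve m (Qmat m A a) f)) as [Hp|Hz]; auto. exfalso.
   assert (Hf0 : forall i, (i<m)%nat -> f i = 0).
   { intros i Hi. rewrite <- (solveQ m A a f Ha i Hi). apply mv_zero. intros j Hj. apply (vnorm_zero m _ (eq_sym Hz)); auto. }
   assert (Hd : 0 < /2 < 1) by lra.
   pose proof (Hfd2 _ Hd) as H1. pose proof (Hfd _ Hd) as H2.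
   assert (E1 : vnorm m (fd (/2)) = vnorm m (vsub (fd (/2)) f)). { apply vnorm_ext. intros; unfold vsub; rewrite Hf0; auto; ring. }
   assert (Haq : 0 < a0 * q) by nra.
   pose proof (noiseQ m A (a0*q) (solve m (Qmat m A (a0*q)) (fd (/2))) (fd (/2)) Haq (solveQ m A (a0*q) (fd (/2)) Haq)) as H3.
   pose proof (phi_gt (/2) eps Hd Heps) as H4.
   assert (H5 : (1-q)*(a0*q*vnorm m (solve m (Qmat m A (a0 * q)) (fd (/ 2)))) <= (1-q) * (/2)) by (apply Rmult_le_compat_l; lra).
   assert (H6 : Rpower (/2) eps < C * Rpower (/2) eps). { pose proof (Rpower_pos (/2) eps). nra. }
   lra. }
 assert (HG0 : forall g n, 0 <= Gseq m A q a0 g n).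
 { intros g n. induction n; simpl. lra. apply Rplus_le_le_0_compat. nra.
   repeat apply Rmult_le_pos; try lra. apply pow_le; lra. apply vnorm_pos. }
 assert (HGl : forall d n, 0 < d < 1 -> (1 <= n)%nat ->
     (1-q) * (a0 * q^n * vnorm m (solve m (Qmat m A (a0*q^n)) f) - d) <= Gseq m A q a0 (fd d) n).
 { intros d n Hd Hn. destruct n as [|n]; [lia|].
   change (Gseq m A q a0 (fd d) (S n)) with (q * Gseq m A q a0 (fd d) n + (1 - q) * a0 * q ^ (S n) * vnorm m (solve m (Qmat m A (a0 * q ^ (S n))) (fd d))).
   pose proof (xlower m A f (a0*q^S n) (fd d) (Han _)) as H1. pose proof (Hfd d Hd) as H2. pose proof (HG0 (fd d) n) as H3.
   set (W := vnorm m (solve m (Qmat m A (a0 * q ^ S n)) f)) in *.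
   set (X := vnorm m (solve m (Qmat m A (a0 * q ^ S n)) (fd d))) in *.
   set (a := a0 * q ^ S n) in *.
   assert ((1-q)*(a*W - d) <= (1-q)*(a*X)) by (apply Rmult_le_compat_l; lra).
   assert (0 <= q * Gseq m A q a0 (fd d) n) by nra.
   replace ((1 - q) * a0 * q ^ S n * X) with ((1-q)*(a*X)) by (unfold a; ring). lra. }
 assert (HGu : forall d n, 0<d<1 -> Gseq m A q a0 (fd d) n <= d + 2 * (2*a0*V) * r^n).
 { intros d n Hd. apply (rec_upper (Gseq m A q a0 (fd d)) q r d (2*a0*V)); auto; try lra. nra. simpl. nra.
   intros k. change (Gseq m A q a0 (fd d) (S k)) with (q * Gseq m A q a0 (fd d) k + (1 - q) * a0 * q ^ (S k) * vnorm m (solve m (Qmat m A (a0 * q ^ (S k))) (fd d))).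
   pose proof (xbound m A f y v Hy Hv (a0*q^S k) (fd d) (Han _)) as H1. pose proof (Hfd d Hd) as H2.
   pose proof (Hqr (S k)) as H3. fold V in H1.
   set (X := vnorm m (solve m (Qmat m A (a0 * q ^ S k)) (fd d))) in *.
   assert (a0 * q ^ S k * V <= a0 * V * r ^ S k). { replace (a0 * V * r ^ S k) with (a0 * r ^ S k * V) by ring. apply Rmult_le_compat_r; auto. apply Rmult_le_compat_l; lra. }
   assert ((1-q)*(a0 * q ^ S k * X) <= (1-q)*(d + 2 * a0 * V * r ^ S k)) by (apply Rmult_le_compat_l; lra).
   replace ((1 - q) * a0 * q ^ S k * X) with ((1-q)*(a0 * q ^ S k * X)) by ring. lra. }
 set (c1 := / (2 * sqrt a0)). set (c2 := sqrt a0 * V / 2).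
 assert (Hc1 : 0 < c1). { unfold c1. apply Rinv_0_lt_compat. assert (0 < sqrt a0) by (apply sqrt_lt_R0; lra). lra. }
 assert (Hc2 : 0 <= c2). { unfold c2. assert (0 <= sqrt a0) by apply sqrt_pos. unfold Rdiv. apply Rmult_le_pos; [|lra]. nra. }
 assert (HEu : forall d n, 0<d<1 -> vnorm m (vsub (useq m A q a0 (fd d) n) y) <= q^n*Y + c1 * d * (/r)^n + 2*c2*r^n).
 { intros d n Hd. apply (rec_err (fun n => vnorm m (vsub (useq m A q a0 (fd d) n) y)) q r Y c1 d c2); auto; try lra.
   - simpl. rewrite (vnorm_ext m _ (fun i => (-1) * y i)). rewrite vnorm_scal. rewrite Rabs_left by lra. fold Y. nra.
     intros; unfold vsub; ring.
   - intros k. cbv beta.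
     set (s := solve m (Tmat m A (a0*q^(S k))) (matvec m (transp A) (fd d))).
     rewrite (vnorm_ext m (vsub (useq m A q a0 (fd d) (S k)) y) (fun i => q * vsub (useq m A q a0 (fd d) k) y i + (1-q) * vsub s y i))
       by (intros; unfold vsub, s; cbn [useq]; ring).
     eapply Rle_trans. apply vnorm_triang. rewrite !vnorm_scal. rewrite (Rabs_right q), (Rabs_right (1-q)) by lra.
     apply Rplus_le_compat_l. apply Rmult_le_compat_l; [lra|].
     pose proof (sbound m A f y v Hy Hv (a0*q^S k) (fd d) (Han _)) as H1. pose proof (Hfd d Hd) as H2. fold s V in H1.
     assert (Hsa : sqrt (a0 * q ^ S k) = sqrt a0 * r ^ S k).
     { rewrite sqrt_mult_alt by lra. rewrite Hqn, sqrt_square; auto. left; auto. }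
     assert (Hsa0 : 0 < sqrt a0) by (apply sqrt_lt_R0; lra).
     assert (Hsq : a0 * q ^ S k = (sqrt a0 * r ^ S k) * (sqrt a0 * r ^ S k)).
     { rewrite <- Hsa. rewrite sqrt_sqrt; auto. left; auto. }
     rewrite Hsa in H1. rewrite Hsq in H1.
     set (sa := sqrt a0 * r ^ S k) in *. assert (Hsapos : 0 < sa) by (unfold sa; apply Rmult_lt_0_compat; auto).
     replace (c1 * d * (/ r) ^ S k + c2 * r ^ S k) with ((d + sa * sa * V) / (2 * sa)).
     + set (X := vnorm m (vsub s y)) in *. apply (Rmult_le_reg_r (2*sa)); [lra|].
       replace ((d + sa * sa * V) / (2 * sa) * (2 * sa)) with (d + sa * sa * V) by (field; lra).
       assert (0 <= sa * sa * V) by (apply Rmult_le_pos; nra). lra.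
     + unfold c1, c2, sa. rewrite pow_inv. field. split; [apply Rgt_not_eq, Hrn|lra]. }
 intros e He.
 destruct (pow_lt_1_zero r ltac:(rewrite Rabs_right; lra) (e / (2 * (Y + 2*c2 + 1)))) as [N HN].
 { apply Rdiv_lt_0_compat; lra. }
 destruct (finite_min (fun n => (1-q)*(a0*q^n*vnorm m (solve m (Qmat m A (a0*q^n)) f)))) with (N := (N+1)%nat) as [mu [Hmu0 Hmu]].
 { intros n. apply Rmult_lt_0_compat. lra. apply Rmult_lt_0_compat; auto. }
 set (K := c1 * (/r) * (2*(2*a0*V) + 1) / (C - 1)).
 assert (HK : 0 < K). { unfold K. apply Rdiv_lt_0_compat; [|lra]. apply Rmult_lt_0_compat. apply Rmult_lt_0_compat; auto.
   apply Rinv_0_lt_compat; lra. nra. }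
 exists (Rmin (Rpower (mu/(1+C)) (/eps)) (Rpower (e/(2*K)) (/(1-eps)))).
 split. apply Rmin_pos; apply Rpower_pos.
 intros d Hd Hdeta.
 assert (Hphi := phi_gt d eps Hd Heps).
 assert (Hphi1 : Rpower d eps < mu/(1+C)).
 { apply Rpower_small; try lra. apply Rdiv_lt_0_compat; lra. eapply Rlt_le_trans; [exact Hdeta | apply Rmin_l]. }
 assert (Hpow2 : Rpower d (1-eps) < e/(2*K)).
 { apply Rpower_small; try lra. apply Rdiv_lt_0_compat; lra. eapply Rlt_le_trans; [exact Hdeta | apply Rmin_r]. }
 assert (Hphi2 : (1+C) * Rpower d eps < mu).
 { apply (Rmult_lt_compat_l (1+C)) in Hphi1; [|lra]. replace ((1 + C) * (mu / (1 + C))) with mu in Hphi1 by (field; lra). lra. }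
 destruct (Hnd d Hd) as [Hn1 [HGn Hmin]].
 assert (HnN : (N+2 <= nd d)%nat).
 { destruct (Nat.le_gt_cases (N+2) (nd d)) as [h|h]; auto. exfalso.
   pose proof (Hmu (nd d) ltac:(lia)) as H1. pose proof (HGl d (nd d) Hd Hn1) as H2. cbv beta in H1.
   assert ((1-q)*d <= d) by nra. lra. }
 assert (Ep : nd d = S (nd d - 1)) by lia. set (p := (nd d - 1)%nat) in *.
 assert (HGp : C * Rpower d eps < Gseq m A q a0 (fd d) p).
 { destruct (Rlt_le_dec (C * Rpower d eps) (Gseq m A q a0 (fd d) p)) as [h|h]; auto. exfalso.
   pose proof (Hmin p ltac:(lia) h). lia. }
 pose proof (HGu d p Hd) as HGup.
 set (beta := 2 * (2 * a0 * V)) in *.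
 set (phi := Rpower d eps) in *. set (R1 := Rpower d (1-eps)) in *.
 assert (Hd1 : d = R1 * phi).
 { unfold R1, phi. rewrite <- Rpower_plus. replace (1 - eps + eps) with 1 by ring. rewrite Rpower_1; lra. }
 set (rp := (/r)^p).
 assert (Hrp : rp * r ^ p = 1). { unfold rp. rewrite pow_inv. field. apply Rgt_not_eq, Hrn. }
 assert (Hrp0 : 0 < rp). { unfold rp. apply pow_lt. apply Rinv_0_lt_compat; lra. }
 assert (H1 : (C - 1) * phi * rp < beta).
 { assert ((C-1)*phi < beta * r ^ p) by lra.
   apply (Rmult_lt_compat_r rp) in H; auto. replace (beta * r ^ p * rp) with (beta * (rp * r ^ p)) in H by ring. rewrite Hrp in H. lra. }
 assert (H2 : phi * rp <= (beta + 1) / (C - 1)).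
 { apply (Rmult_le_reg_l (C-1)); [lra|]. replace ((C - 1) * ((beta + 1) / (C - 1))) with (beta + 1) by (field; lra). lra. }
 assert (Hnoise : c1 * d * (/r) ^ (S p) <= K * R1).
 { replace (c1 * d * (/r) ^ (S p)) with ((c1 * /r * R1) * (phi * rp)) by (rewrite Hd1; unfold rp; simpl; ring).
   replace (K * R1) with ((c1 * /r * R1) * ((beta + 1) / (C - 1))) by (unfold K, beta; unfold Rdiv; ring).
   apply Rmult_le_compat_l; auto. assert (0 < R1) by apply Rpower_pos. assert (0 < /r) by (apply Rinv_0_lt_compat; lra).
   left. apply Rmult_lt_0_compat; auto. apply Rmult_lt_0_compat; auto. }
 assert (HKR : K * R1 < e / 2).
 { apply (Rmult_lt_compat_l K) in Hpow2; auto. replace (K * (e / (2 * K))) with (e/2) in Hpow2 by (field; lra). auto. }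
 pose proof (HN (S p) ltac:(lia)) as HNp. rewrite Rabs_right in HNp by (left; apply Hrn).
 assert (Hbias : q ^ S p * Y + 2 * c2 * r ^ S p < e / 2).
 { pose proof (Hqr (S p)). pose proof (Hrn (S p)).
   assert (r ^ S p * (Y + 2 * c2 + 1) < e / 2).
   { apply (Rmult_lt_compat_r (Y + 2*c2 + 1)) in HNp; [|lra].
     replace (e / (2 * (Y + 2 * c2 + 1)) * (Y + 2 * c2 + 1)) with (e/2) in HNp by (field; lra). auto. }
   assert (q ^ S p * Y <= r ^ S p * Y) by (apply Rmult_le_compat_r; auto). nra. }
 rewrite Ep. pose proof (HEu d (S p) Hd). lra.
Qed.
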